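(* Let $R$ be a ring, let $X$ be an $R^\circ$-complex and let $Y$ be a bounded above $R$-complex with $\sup Y=k\in\mathbb{Z}$. Then there is an exact sequence of $\mathbb{Z}$-complexes $$0\to\prod_{i\in\mathbb{N}}(X\otimes_RY_{\le k-i})\xrightarrow{1-\varepsilon}\prod_{i\in\mathbb{N}}(X\otimes_RY_{\le k-i})\to X\check\otimes_RY\to0,$$ where $\varepsilon$ denotes the inverse system of inclusions $X\otimes_RY_{\le k-v}\to X\otimes_RY_{\le k-u}$ ($u\le v$) induced by the filtration $Y_{\le k}\supseteq Y_{\le k-1}\supseteq\cdots$, and $1-\varepsilon$ is given by $(z_i)_i\mapsto(z_i-\varepsilon^{i,i+1}(z_{i+1}))_i$.
   Context: For an $R$-complex $Y$, $\sup Y=\sup\{i: Y_i\neq0\}$, and $Y_{\le m}$ is the subcomplex with $(Y_{\le m})_i=Y_i$ for $i\le m$ and $0$ otherwise. For an $R^\circ$-complex $X$ and an $R$-complex $Y$: $X\otimes_RY$ has degree-$n$ term $\coprod_{i}X_i\otimes_RY_{n-i}$, differential $\partial(x\otimes y)=\partial^X(x)\otimes y+(-1)^{|x|}x\otimes\partial^Y(y)$; $X\bar\otimes_RY$ has degree-$n$ term $\prod_iX_i\otimes_RY_{n-i}$ with the same differential; the stable tensor product is $X\check\otimes_RY=(X\bar\otimes_RY)/(X\otimes_RY)$. *)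

(* Defs.v *)
From HB Require Import structures.
From mathcomp Require Import all_boot all_order all_algebra.
From Stdlib Require Import ClassicalEpsilon.
Set Implicit Arguments. Unset Strict Implicit. Unset Printing Implicit Defensive.
Import Order.TTheory GRing.Theory Num.Theory.
Local Open Scope ring_scope.

Definition is_additive (U V : zmodType) (f : U -> V) : Prop :=
  forall x y, f (x - y) = f x - f y.

(* Right R-modules are left modules over the converse ring R^c:
   the right action  m . r  is written  (r : R^c) *: m. *)
Definition balanced (R : pzRingType) (M : lmodType R^c) (N : lmodType R)
  (A : zmodType) (f : M -> N -> A) : Prop :=
  [/\ forall n, is_additive (fun m => f m n),
      forall m, is_additive (f m) &
      forall (r : R) (m : M) (n : N), f ((r : R^c) *: m) n = f m (r *: n)].

Record tensor_product (R : pzRingType) (M : lmodType R^c) (N : lmodType R) := TensorProduct {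
  tp_car :> zmodType;
  tp_tens : M -> N -> tp_car;
  tp_bal : balanced tp_tens;
  tp_univ : forall (A : zmodType) (f : M -> N -> A), balanced f ->
    exists g : tp_car -> A,
      [/\ is_additive g, forall m n, g (tp_tens m n) = f m n &
          forall g' : tp_car -> A, is_additive g' ->
            (forall m n, g' (tp_tens m n) = f m n) -> forall t, g' t = g t] }.

Definition tmap (R : pzRingType) (M M' : lmodType R^c) (N N' : lmodType R)
  (T : tensor_product M N) (T' : tensor_product M' N')
  (f : M -> M') (g : N -> N') : T -> T' :=
  epsilon (inhabits (fun _ => 0))
    (fun h : T -> T' => is_additive h /\
       forall m n, h (tp_tens T m n) = tp_tens T' (f m) (g n)).
Arguments tmap {R M M' N N'} T T' f g.

Record complex (S : pzRingType) := Complex {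
  cobj :> int -> lmodType S;
  cdiff : forall i : int, {linear cobj (i + 1) -> cobj i};
  cdiff2 : forall (i : int) (x : cobj (i + 1 + 1)), cdiff i (cdiff (i + 1) x) = 0 }.

Definition sup_eq (R : pzRingType) (Y : complex R) (k : int) : Prop :=
  (exists y : Y k, y != 0) /\ (forall j : int, k < j -> forall y : Y j, y = 0).

Section Tensor.
Variables (R : pzRingType) (X : complex R^c) (Y : complex R).
Variable tp : forall i j : int, tensor_product (X i) (Y j).

(* The degree-n term
   prod_i X_i (x) Y_(n-i) of the complex X bar(x) Y is the set of families
   supported on {i + j = n}; the degree-n term of X (x)_R Y is the set of such
   families with finite support. *)
Definition fam := forall i j : int, tp i j.

Definition fam_sub (f g : fam) : fam := fun i j => f i j - g i j.

Definition deg (n : int) (f : fam) : Prop :=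
  forall i j : int, i + j != n -> f i j = 0.

Definition finsupp (f : fam) : Prop :=
  exists s : seq (int * int), forall i j : int, (i, j) \notin s -> f i j = 0.

Definition sgn_tw (i : int) (A : zmodType) (x : A) : A :=
  if odd `|i|%N then - x else x.

(* the differential  d(x (x) y) = dx (x) y + (-1)^|x| x (x) dy,
   same formula on X (x) Y and X bar(x) Y *)
Definition tdiff (f : fam) : fam := fun i j =>
  tmap (tp (i + 1) j) (tp i j) (cdiff X i) idfun (f (i + 1) j)
  + sgn_tw i (tmap (tp i (j + 1)) (tp i j) idfun (cdiff Y j) (f i (j + 1))).

(* element of (X (x)_R Y_(<= m))_n, viewed as the subcomplex of X (x)_R Y
   spanned by the X_i (x) Y_j with j <= m *)
Definition trunc_elem (m n : int) (f : fam) : Prop :=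
  [/\ deg n f, finsupp f & forall i j : int, m < j -> f i j = 0].

Definition prod_elem (k n : int) (z : nat -> fam) : Prop :=
  forall m : nat, trunc_elem (k - m%:Z) n (z m).

Definition pdiff (z : nat -> fam) : nat -> fam := fun m => tdiff (z m).

Definition one_minus_eps (z : nat -> fam) : nat -> fam :=
  fun m => fam_sub (z m) (z m.+1).

End Tensor.

Arguments fam {R X Y} tp.
Arguments fam_sub {R X Y tp} f g i j.
Arguments deg {R X Y tp} n f.
Arguments finsupp {R X Y tp} f.
Arguments tdiff {R X Y} tp f i j.
Arguments trunc_elem {R X Y} tp m n f.
Arguments prod_elem {R X Y} tp k n z.
Arguments pdiff {R X Y} tp z m i j.
Arguments one_minus_eps {R X Y tp} z m i j.

(* Main.v *)
Require Import Defs.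
From HB Require Import structures.
From mathcomp Require Import all_boot all_order all_algebra.
From mathcomp Require Import zify.
From Stdlib Require Import ClassicalEpsilon.
Import GRing.Theory.
Local Open Scope ring_scope.
Set Implicit Arguments.

Lemma sub00 (A : zmodType) : (0:A) = 0 - 0. Proof. by rewrite subrr. Qed.

Lemma add0_of (A B : zmodType) (h : A -> B) : is_additive h -> h 0 = 0.
Proof. by move=> hh; rewrite -(subrr 0) hh subrr. Qed.

Lemma addN_of (A B : zmodType) (h : A -> B) : is_additive h -> forall x, h (- x) = - h x.
Proof. by move=> hh x; rewrite -sub0r hh add0_of // sub0r. Qed.

Lemma addD_of (A B : zmodType) (h : A -> B) : is_additive h -> forall x y, h (x + y) = h x + h y.
Proof. move=> hh x y; have := hh (x + y) y; rewrite addrK => ->; by rewrite subrK. Qed.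

Lemma add_sum (A B : zmodType) (h : A -> B) (F : nat -> A) N : is_additive h ->
  h (\sum_(m < N) F m) = \sum_(m < N) h (F m).
Proof.
move=> hh; elim: N => [|N IH]; first by rewrite !big_ord0 add0_of.
by rewrite !big_ord_recr /= addD_of // IH.
Qed.

Lemma tmap_additive (R : pzRingType) (M M' : lmodType R^c) (N N' : lmodType R)
  (T : tensor_product M N) (T' : tensor_product M' N') (f : M -> M') (g : N -> N') :
  (forall a b, f (a - b) = f a - f b) -> (forall (r : R) m, f ((r : R^c) *: m) = (r : R^c) *: f m) ->
  (forall a b, g (a - b) = g a - g b) -> (forall (r : R) n, g (r *: n) = r *: g n) ->
  is_additive (tmap T T' f g).
Proof.
move=> hf hfs hg hgs.
have bal : balanced (fun m n => tp_tens T' (f m) (g n)).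
  have [b1 b2 b3] := tp_bal T'.
  split.
  - by move=> n a b /=; rewrite hf b1.
  - by move=> m a b /=; rewrite hg b2.
  - by move=> r m n /=; rewrite hfs hgs b3.
have [h [h1 h2 _]] := tp_univ T bal.
have ex : exists h : T -> T', is_additive h /\
   forall m n, h (tp_tens T m n) = tp_tens T' (f m) (g n) by exists h.
exact: (proj1 (epsilon_spec (inhabits (fun _ => 0)) _ ex)).
Qed.

Lemma sgn_tw_sub (i : int) (A : zmodType) (x y : A) : sgn_tw i (x - y) = sgn_tw i x - sgn_tw i y.
Proof. by rewrite /sgn_tw; case: ifP => // _; rewrite opprD. Qed.

Lemma sgn_tw_sum (i : int) (A : zmodType) (F : nat -> A) N :
  sgn_tw i (\sum_(m < N) F m) = \sum_(m < N) sgn_tw i (F m).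
Proof. by rewrite /sgn_tw; case: ifP => // _; rewrite sumrN. Qed.

Lemma sum_stable (A : zmodType) (f : nat -> A) a b : (forall m, (a <= m)%N -> f m = 0) ->
  (a <= b)%N -> \sum_(m < b) f m = \sum_(m < a) f m.
Proof.
move=> hf hab; rewrite -!(big_mkord xpredT) (@big_cat_nat _ _ _ a 0 b _ _ (leq0n a) hab) /=.
rewrite [X in _ + X]big1_seq ?addr0 // => i /andP[_]; rewrite mem_index_iota.
by case/andP=> hi _; apply: hf.
Qed.

Lemma fs_zero (R : pzRingType) (X : complex R^c) (Y : complex R) (tp : forall i j : int, tensor_product (X i) (Y j)) (f : fam tp) :
  (forall i j, f i j = 0) -> @finsupp R X Y tp f.
Proof. by move=> h; exists [::] => i j _; apply: h. Qed.

Lemma fs_ext (R : pzRingType) (X : complex R^c) (Y : complex R) (tp : forall i j : int, tensor_product (X i) (Y j)) (f g : fam tp) :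
  @finsupp R X Y tp g -> (forall i j, f i j = g i j) -> finsupp f.
Proof. by move=> [s hs] e; exists s => i j h; rewrite e hs. Qed.

Lemma fs_sub (R : pzRingType) (X : complex R^c) (Y : complex R) (tp : forall i j : int, tensor_product (X i) (Y j)) (f g : fam tp) :
  @finsupp R X Y tp f -> finsupp g -> finsupp (fam_sub f g).
Proof.
move=> [s1 h1] [s2 h2]; exists (s1 ++ s2) => i j; rewrite mem_cat negb_or => /andP[a b].
by rewrite /fam_sub h1 // h2 // subrr.
Qed.

Lemma fs_add (R : pzRingType) (X : complex R^c) (Y : complex R) (tp : forall i j : int, tensor_product (X i) (Y j)) (f g : fam tp) :
  @finsupp R X Y tp f -> finsupp g -> @finsupp R X Y tp (fun i j => f i j + g i j).
Proof.
move=> [s1 h1] [s2 h2]; exists (s1 ++ s2) => i j; rewrite mem_cat negb_or => /andP[a b].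
by rewrite h1 // h2 // addr0.
Qed.

Lemma fs_sum (R : pzRingType) (X : complex R^c) (Y : complex R) (tp : forall i j : int, tensor_product (X i) (Y j)) (z : nat -> fam tp) N :
  (forall m, @finsupp R X Y tp (z m)) -> @finsupp R X Y tp (fun i j => \sum_(m < N) z m i j).
Proof.
move=> h; elim: N => [|N IH].
  by apply: fs_zero => i j; rewrite big_ord0.
apply: fs_ext (fs_add IH (h N)) _ => i j; by rewrite big_ord_recr.
Qed.

Definition Nb (k j : int) : nat := (`|k - j|%N).+1.

Definition piF (R : pzRingType) (X : complex R^c) (Y : complex R) (tp : forall i j : int, tensor_product (X i) (Y j)) (k : int)
  (z : nat -> @fam R X Y tp) : fam tp := fun i j => \sum_(m < Nb k j) z m i j.

Section Main.
Variables (R : pzRingType) (X : complex R^c) (Y : complex R)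
  (tp : forall i j : int, tensor_product (X i) (Y j)) (k : int).

Lemma vanish n (z : nat -> fam tp) : prod_elem tp k n z ->
  forall m i j, k - j < m%:Z -> z m i j = 0.
Proof. by move=> hz m i j h; have [_ _ t] := hz m; apply: t; lia. Qed.

Lemma piF_eq n (z : nat -> fam tp) : prod_elem tp k n z -> forall i j b,
  (forall m, (b <= m)%N -> z m i j = 0) -> piF k z i j = \sum_(m < b) z m i j.
Proof.
move=> hz i j b hb; rewrite /piF; case: (leqP (Nb k j) b) => h.
  by rewrite (@sum_stable _ (fun m => z m i j) (Nb k j) b) // => m hm;
     apply: (vanish hz); rewrite /Nb in hm; lia.
by rewrite (@sum_stable _ (fun m => z m i j) b (Nb k j)) // ltnW.
Qed.

Lemma tm1_sub (i j : int) (a b : tp (i + 1) j) :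
  tmap (tp (i + 1) j) (tp i j) (cdiff X i) idfun (a - b) =
  tmap (tp (i + 1) j) (tp i j) (cdiff X i) idfun a - tmap (tp (i + 1) j) (tp i j) (cdiff X i) idfun b.
Proof.
apply: tmap_additive => //.
- by move=> x y; rewrite linearB.
- by move=> r x; rewrite linearZ.
Qed.

Lemma tm2_sub (i j : int) (a b : tp i (j + 1)) :
  tmap (tp i (j + 1)) (tp i j) idfun (cdiff Y j) (a - b) =
  tmap (tp i (j + 1)) (tp i j) idfun (cdiff Y j) a - tmap (tp i (j + 1)) (tp i j) idfun (cdiff Y j) b.
Proof.
apply: tmap_additive => //.
- by move=> x y; rewrite linearB.
- by move=> r x; rewrite linearZ.
Qed.

Lemma tm1_sum (i j : int) (F : nat -> tp (i + 1) j) N :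
  tmap (tp (i + 1) j) (tp i j) (cdiff X i) idfun (\sum_(m < N) F m) =
  \sum_(m < N) tmap (tp (i + 1) j) (tp i j) (cdiff X i) idfun (F m).
Proof. by apply: add_sum => x y; apply: tm1_sub. Qed.

Lemma tm2_sum (i j : int) (F : nat -> tp i (j + 1)) N :
  tmap (tp i (j + 1)) (tp i j) idfun (cdiff Y j) (\sum_(m < N) F m) =
  \sum_(m < N) tmap (tp i (j + 1)) (tp i j) idfun (cdiff Y j) (F m).
Proof. by apply: add_sum => x y; apply: tm2_sub. Qed.

Lemma tens_zero (hY : sup_eq Y k) (i j : int) : k < j -> forall t : tp i j, t = 0.
Proof.
move=> hkj t; have [_ hy] := hY.
have [b1 b2 b3] := tp_bal (tp i j).
have bal0 : balanced (fun (m : X i) (n : Y j) => (0 : tp i j)).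
  by split; [move=> n x y; exact: sub00 | move=> m x y; exact: sub00 | ].
have [g [_ _ hu]] := tp_univ (tp i j) bal0.
have ht : forall m n, id (tp_tens (tp i j) m n) = 0.
  by move=> m n; rewrite /= (hy j hkj n); apply: add0_of (b2 m).
have e1 : id t = g t := hu id (fun x y => erefl) ht t.
have e2 : (fun _ => 0) t = g t := hu (fun _ => 0) (fun x y => sub00 _) (fun m n => erefl) t.
by rewrite /= in e1 e2; rewrite e1 -e2.
Qed.

End Main.

Lemma telescope_gen (A : zmodType) (w : nat -> A) N :
  \sum_(m < N) (w m - w m.+1) = w 0%N - w N.
Proof.
elim: N => [|N IH]; first by rewrite big_ord0 subrr.
rewrite big_ord_recr /= IH.
by rewrite addrA subrK.
Qed.

Lemma gl (A : zmodType) (p s a : A) : a = (p - s) - (p - (s + a)).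
Proof. by rewrite opprB !addrA subrK addrAC subrr add0r. Qed.

Theorem corollary3p6 (R : pzRingType) (X : complex R^c) (Y : complex R)
  (tp : forall i j : int, tensor_product (X i) (Y j)) (k : int)
  (hY : sup_eq Y k) :
  (* 1 - eps is a chain map of the product complex to itself *)
  (forall n z, prod_elem tp k n z -> prod_elem tp k n (one_minus_eps z)) /\
  (forall z m i j, pdiff tp (one_minus_eps z) m i j = one_minus_eps (pdiff tp z) m i j) /\
  (* there is a chain map pi : prod_i X (x) Y_(<= k-i) -> X check(x) Y, given on
     representatives in X bar(x) Y (the quotient by X (x) Y is "modulo finsupp") *)
  exists pi : int -> (nat -> fam tp) -> fam tp,
    forall n : int,
    [/\ (* pi lands in degree n of X bar(x) Y *)
        forall z, prod_elem tp k n z -> deg n (pi n z),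
        (* pi is additive (into the quotient) *)
        forall z z', prod_elem tp k n z -> prod_elem tp k n z' ->
          finsupp (fam_sub (pi n (fun m => fam_sub (z m) (z' m)))
                           (fam_sub (pi n z) (pi n z'))),
        (* pi commutes with the differentials (in the quotient) *)
        forall z, prod_elem tp k (n + 1) z ->
          finsupp (fam_sub (tdiff tp (pi (n + 1) z)) (pi n (pdiff tp z))),
        (* exactness at the left: 1 - eps is injective *)
        forall z, prod_elem tp k n z ->
          (forall m i j, one_minus_eps z m i j = 0) -> forall m i j, z m i j = 0 &
        [/\ (* exactness in the middle: ker pi = im (1 - eps) *)
            forall z, prod_elem tp k n z ->
              (finsupp (pi n z) <->
               exists w, prod_elem tp k n w /\
                 forall m i j, z m i j = one_minus_eps w m i j) &
            (* exactness at the right: pi is surjective onto X check(x) Y *)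
            forall f, deg n f ->
              exists z, prod_elem tp k n z /\ finsupp (fam_sub f (pi n z))]].
Proof.
split.
  move=> n z hz m; have [d1 f1 t1] := hz m; have [d2 f2 t2] := hz m.+1; split.
  - by move=> i j hij; rewrite /one_minus_eps /fam_sub d1 // d2 // subrr.
  - exact: fs_sub.
  - by move=> i j hj; rewrite /one_minus_eps /fam_sub t1 // t2 ?subrr //; lia.
split.
  move=> z m i j; rewrite /pdiff /one_minus_eps /tdiff /fam_sub tm1_sub tm2_sub sgn_tw_sub.
  by rewrite opprD addrACA.
exists (fun _ z => piF k z) => n; split.
- move=> z hz i j hij; rewrite /piF big1 // => m _; have [d _ _] := hz m; exact: d.
- move=> z z' _ _; apply: fs_zero => i j; rewrite /fam_sub /piF /= sumrB subrr //.
- move=> z hz; apply: fs_zero => i j; rewrite /fam_sub /tdiff /piF /pdiff /=.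
  have e : \sum_(m < Nb k (j + 1)) z m i (j + 1) = \sum_(m < Nb k j) z m i (j + 1).
    apply: (piF_eq hz) => m hm; apply: (vanish hz); rewrite /Nb in hm; lia.
  by rewrite e (tm1_sum X Y tp i j (fun m => z m (i + 1) j)) (tm2_sum X Y tp i j (fun m => z m i (j + 1))) (@sgn_tw_sum i _ (fun m => tmap (tp i (j + 1)) (tp i j) idfun (cdiff Y j) (z m i (j + 1)))) -big_split subrr.
- move=> z hz h0 m i j.
  have e : forall m, z m i j = z 0%N i j.
    elim=> [|p IH] //; have := h0 p i j; rewrite /one_minus_eps /fam_sub => /eqP.
    by rewrite subr_eq0 => /eqP <-.
  rewrite e -(e (Nb k j)); apply: (vanish hz); rewrite /Nb; lia.
split.
- move=> z hz; split.
  + move=> hf.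
    exists (fun m => fam_sub (piF k z) (fun i j => \sum_(l < m) z l i j)); split.
    * move=> m; split.
      -- move=> i j hij; rewrite /fam_sub /piF !big1 ?subrr // => l _;
         have [d _ _] := hz l; exact: d.
      -- apply: fs_sub => //; apply: fs_sum => l; by have [_ f _] := hz l.
      -- move=> i j hj; rewrite /fam_sub (piF_eq hz i j m) ?subrr // => l hl;
         apply: (vanish hz); lia.
    * move=> m i j; rewrite /one_minus_eps /fam_sub big_ord_recr /=.
      exact: gl.
  + move=> [w [hw e]].
    have [_ f0 _] := hw 0%N.
    apply: (@fs_ext _ _ _ tp (piF k z) (w 0%N) f0) => i j.
    rewrite /piF (eq_bigr (fun m : 'I_(Nb k j) => w m i j - w m.+1 i j)); last first.
      by move=> m _; rewrite e.
    rewrite (@telescope_gen _ (fun m => w m i j)) (vanish hw (Nb k j)) ?subr0 //; rewrite /Nb; lia.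
- move=> f hf.
  exists (fun m i j => if j == k - m%:Z then f i j else 0); split.
  + move=> m; split.
    * by move=> i j hij; case: eqP => // _; apply: hf.
    * exists [:: (n - (k - m%:Z), k - m%:Z)] => i j; rewrite inE.
      move=> hne; case: eqP => // ej; apply: hf; apply: contra hne => /eqP hij.
      by apply/eqP; rewrite -hij ej addrK.
    * by move=> i j hj; case: eqP => // ej; lia.
  + apply: fs_zero => i j; rewrite /fam_sub /piF; case: (boolP (j <= k)) => hjk.
    * rewrite (bigD1 (Ordinal (ltnSn `|k - j|%N))) //=.
      have -> : (j == k - (`|k - j|%N)%:Z) = true by apply/eqP; lia.
      rewrite big1 ?addr0 ?subrr // => -[p hp] hm; case: eqP => // /= ej.
      case/eqP: hm; apply: val_inj => /=; lia.
    * have hkj : k < j by lia.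
      have -> : f i j = 0 by exact: (@tens_zero _ X Y tp k hY i j hkj (f i j)).
      rewrite big1 ?subrr // => -[p hp] _; case: eqP => // /= ej; lia.
Qed.
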